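(* Let $n,m\ge 1$, let $A_1,\ldots,A_m$ be real symmetric $n\times n$ matrices and $a_1,\ldots,a_m\in\mathbb{R}^n$, and define $f:\mathbb{R}^n\to\mathbb{R}^m$ by $f(x)=(f_1(x),\ldots,f_m(x))$ with $f_i(x)=\frac12 x^TA_ix+a_i^Tx$. Let $A=[a_1~\ldots~a_m]\in\mathbb{R}^{n\times m}$, let $$L_{\rm new}:=\sqrt{\lambda_{\max}\Big(\sum_{i=1}^mA_i^TA_i\Big)},\qquad \nu:=\sigma_{\min}(A)=\sqrt{\lambda_{\min}(A^TA)},$$ assume $L_{\rm new}>0$, and set $\epsilon^*_{\rm new}:=\nu/(2L_{\rm new})$. Then for every $\epsilon$ with $0<\epsilon<\epsilon^*_{\rm new}$ and every $a\in\mathbb{R}^n$ with $\|a\|<2(\epsilon^*_{\rm new}-\epsilon)$, the set $$F_m(\epsilon,a)=\{f(x):~x\in\mathbb{R}^n,~\|x-a\|\le\epsilon\}$$ is a convex subset of $\mathbb{R}^m$.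
   Context: $\|\cdot\|$ on vectors is the Euclidean norm. $\lambda_{\max},\lambda_{\min}$ denote the largest and smallest eigenvalue of a symmetric matrix, and $\sigma_{\min}(A)$ denotes the smallest singular value of $A$, defined as $\sqrt{\lambda_{\min}(A^TA)}$. *)

(* Defs.v *)
From HB Require Import structures.
From mathcomp Require Import all_boot all_order all_algebra.
From mathcomp Require Import all_classical all_reals all_analysis.
Set Implicit Arguments. Unset Strict Implicit. Unset Printing Implicit Defensive.
Import Order.TTheory GRing.Theory Num.Theory.
Local Open Scope classical_set_scope.
Local Open Scope ring_scope.

Definition vnorm (R : realType) (n : nat) (x : 'cV[R]_n) : R :=
  Num.sqrt (\sum_(k < n) (x k 0) ^+ 2).

Definition lambda_max (R : realType) (n : nat) (S : 'M[R]_n) : R :=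
  sup [set a : R | eigenvalue S a].
Definition lambda_min (R : realType) (n : nat) (S : 'M[R]_n) : R :=
  inf [set a : R | eigenvalue S a].

Definition sigma_min (R : realType) (n m : nat) (A : 'M[R]_(n, m)) : R :=
  Num.sqrt (lambda_min (A^T *m A)).

Definition quadmap (R : realType) (n m : nat)
    (Ai : 'I_m -> 'M[R]_n) (ai : 'I_m -> 'cV[R]_n) (x : 'cV[R]_n) : 'cV[R]_m :=
  \col_(i < m) ((2%:R)^-1 * (x^T *m Ai i *m x) 0 0 + ((ai i)^T *m x) 0 0).

Definition Fm (R : realType) (n m : nat)
    (Ai : 'I_m -> 'M[R]_n) (ai : 'I_m -> 'cV[R]_n) (eps : R) (a : 'cV[R]_n)
    : set 'cV[R]_m :=
  [set quadmap Ai ai x | x in [set x | vnorm (x - a) <= eps]].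

Definition colmat (R : realType) (n m : nat) (ai : 'I_m -> 'cV[R]_n) : 'M[R]_(n, m) :=
  \matrix_(j < n, i < m) ai i j 0.

(* Main.v *)
Require Import Defs.
From HB Require Import structures.
From mathcomp Require Import all_boot all_order all_algebra.
From mathcomp Require Import all_classical all_reals all_analysis.
From mathcomp Require Import ring lra.
Import Order.TTheory GRing.Theory Num.Theory.
Import numFieldNormedType.Exports.
Local Open Scope classical_set_scope.
Local Open Scope ring_scope.
Set Implicit Arguments. Unset Strict Implicit. Unset Printing Implicit Defensive.

Lemma mul_self_ge0 (R : realType) (x : R) : 0 <= x * x.
Proof. by rewrite -expr2 sqr_ge0. Qed.

Lemma le_of_sq (R : realType) (a b : R) : 0 <= b -> a ^+ 2 <= b ^+ 2 -> a <= b.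
Proof. move=> hb h; rewrite leNgt; apply/negP => hab; nra. Qed.

Definition dotv (R : realType) (k : nat) (x y : 'cV[R]_k) : R :=
  \sum_(j < k) x j 0 * y j 0.

Lemma dotvE (R : realType) k (x y : 'cV[R]_k) : dotv x y = (x^T *m y) 0 0.
Proof. by rewrite /dotv mxE; apply: eq_bigr => j _; rewrite mxE. Qed.

Lemma dotvC (R : realType) k (x y : 'cV[R]_k) : dotv x y = dotv y x.
Proof. by apply: eq_bigr => j _; rewrite mulrC. Qed.

Lemma dotvDl (R : realType) k (x y z : 'cV[R]_k) :
  dotv (x + y) z = dotv x z + dotv y z.
Proof. by rewrite /dotv -big_split; apply: eq_bigr => j _; rewrite !mxE mulrDl. Qed.

Lemma dotvDr (R : realType) k (x y z : 'cV[R]_k) :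
  dotv z (x + y) = dotv z x + dotv z y.
Proof. by rewrite dotvC dotvDl !(dotvC z). Qed.

Lemma dotvZl (R : realType) k (c : R) (x y : 'cV[R]_k) :
  dotv (c *: x) y = c * dotv x y.
Proof. by rewrite /dotv mulr_sumr; apply: eq_bigr => j _; rewrite !mxE mulrA. Qed.

Lemma dotvZr (R : realType) k (c : R) (x y : 'cV[R]_k) :
  dotv y (c *: x) = c * dotv y x.
Proof. by rewrite dotvC dotvZl dotvC. Qed.

Lemma dotvNl (R : realType) k (x y : 'cV[R]_k) : dotv (- x) y = - dotv x y.
Proof. by rewrite -scaleN1r dotvZl mulN1r. Qed.

Lemma dotvNr (R : realType) k (x y : 'cV[R]_k) : dotv y (- x) = - dotv y x.
Proof. by rewrite dotvC dotvNl dotvC. Qed.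

Lemma dotvBl (R : realType) k (x y z : 'cV[R]_k) :
  dotv (x - y) z = dotv x z - dotv y z.
Proof. by rewrite dotvDl dotvNl. Qed.

Lemma dotvBr (R : realType) k (x y z : 'cV[R]_k) :
  dotv z (x - y) = dotv z x - dotv z y.
Proof. by rewrite dotvDr dotvNr. Qed.

Lemma dotv0l (R : realType) k (y : 'cV[R]_k) : dotv 0 y = 0.
Proof. by rewrite -(scale0r (0 : 'cV[R]_k)) dotvZl mul0r. Qed.

Lemma dotv0r (R : realType) k (y : 'cV[R]_k) : dotv y 0 = 0.
Proof. by rewrite dotvC dotv0l. Qed.

Lemma dotv_ge0 (R : realType) k (x : 'cV[R]_k) : 0 <= dotv x x.
Proof. by apply: sumr_ge0 => j _; rewrite mul_self_ge0. Qed.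

Lemma dotv_eq0 (R : realType) k (x : 'cV[R]_k) : dotv x x = 0 -> x = 0.
Proof.
move=> /eqP; rewrite psumr_eq0; last by move=> j _; rewrite mul_self_ge0.
move=> /allP H; apply/matrixP => j l; rewrite (ord1 l) mxE.
by have := H j (mem_index_enum _); rewrite mulf_eq0 orbb => /eqP.
Qed.

Lemma mul_dotv (R : realType) k l (B : 'M[R]_(k, l)) x y :
  dotv x (B *m y) = dotv (B^T *m x) y.
Proof.
rewrite !dotvE trmx_mul trmxK.
by rewrite !mulmxA.
Qed.

Lemma vnormE (R : realType) k (x : 'cV[R]_k) : vnorm x = Num.sqrt (dotv x x).
Proof. by rewrite /vnorm /dotv; congr Num.sqrt; apply: eq_bigr => j _; rewrite expr2. Qed.

Lemma vnorm_ge0 (R : realType) k (x : 'cV[R]_k) : 0 <= vnorm x.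
Proof. by rewrite vnormE sqrtr_ge0. Qed.

Lemma vnorm_sq (R : realType) k (x : 'cV[R]_k) : vnorm x ^+ 2 = dotv x x.
Proof. by rewrite vnormE sqr_sqrtr // dotv_ge0. Qed.

Lemma dotv_comb (R : realType) k (a b : R) (u v : 'cV[R]_k) :
  dotv (a *: u + b *: v) (a *: u + b *: v) =
  a ^+ 2 * dotv u u + 2 * a * b * dotv u v + b ^+ 2 * dotv v v.
Proof.
rewrite !dotvDl !dotvDr !dotvZl !dotvZr (dotvC v u).
ring.
Qed.

Lemma CSv (R : realType) k (x y : 'cV[R]_k) :
  dotv x y ^+ 2 <= dotv x x * dotv y y.
Proof.
have [p0|] := eqVneq (dotv x x) 0.
  by rewrite (dotv_eq0 p0) dotv0l dotv0l expr0n /= mul0r.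
move=> pn0; have pg : 0 < dotv x x by rewrite lt_neqAle eq_sym pn0 dotv_ge0.
have := dotv_ge0 (dotv x x *: y + (- dotv x y) *: x).
rewrite dotv_comb (dotvC y x).
have -> : dotv x x ^+ 2 * dotv y y + 2 * dotv x x * - dotv x y * dotv x y +
  (- dotv x y) ^+ 2 * dotv x x = dotv x x * (dotv x x * dotv y y - dotv x y ^+ 2)
  by ring.
by rewrite pmulr_rge0 // subr_ge0.
Qed.

Lemma dotv_le (R : realType) k (x y : 'cV[R]_k) :
  `|dotv x y| <= vnorm x * vnorm y.
Proof.
apply: le_of_sq; first by rewrite mulr_ge0 // vnorm_ge0.
by rewrite real_normK ?num_real // exprMn !vnorm_sq CSv.
Qed.

Lemma dotv_le' (R : realType) k (x y : 'cV[R]_k) :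
  dotv x y <= vnorm x * vnorm y.
Proof. exact: le_trans (ler_norm _) (dotv_le _ _). Qed.

Lemma vnormD (R : realType) k (x y : 'cV[R]_k) :
  vnorm (x + y) <= vnorm x + vnorm y.
Proof.
apply: le_of_sq; first by rewrite addr_ge0 // vnorm_ge0.
rewrite vnorm_sq dotvDl !dotvDr sqrrD !vnorm_sq (dotvC y x).
have := dotv_le' x y; lra.
Qed.

Lemma vnormZ (R : realType) k (c : R) (x : 'cV[R]_k) :
  vnorm (c *: x) = `|c| * vnorm x.
Proof.
by rewrite !vnormE dotvZl dotvZr mulrA sqrtrM ?mul_self_ge0 // -expr2 sqrtr_sqr.
Qed.

Lemma vnormN (R : realType) k (x : 'cV[R]_k) : vnorm (- x) = vnorm x.
Proof. by rewrite -scaleN1r vnormZ normrN normr1 mul1r. Qed.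

Lemma vnormB (R : realType) k (x y : 'cV[R]_k) : vnorm (x - y) = vnorm (y - x).
Proof. by rewrite -vnormN opprB. Qed.

Lemma vnorm0 (R : realType) k : vnorm (0 : 'cV[R]_k) = 0.
Proof. by rewrite vnormE dotv0l sqrtr0. Qed.

Lemma vnorm_eq0 (R : realType) k (x : 'cV[R]_k) : vnorm x = 0 -> x = 0.
Proof. by move=> h; apply: dotv_eq0; rewrite -vnorm_sq h expr0n. Qed.


Definition ccf (R : realType) (k : nat) (g : 'rV[R]_k -> R) := continuous g.

Lemma ccf_eq (R : realType) k (f g : 'rV[R]_k -> R) :
  (forall v, f v = g v) -> ccf f -> ccf g.
Proof. by move=> /funext ->. Qed.

Lemma ccf_cst (R : realType) k (c : R) : ccf (fun _ : 'rV[R]_k => c).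
Proof. by move=> x; apply: cst_continuous. Qed.

Lemma ccf_coord (R : realType) k (j : 'I_k) : ccf (fun v : 'rV[R]_k => v 0 j).
Proof. exact: coord_continuous. Qed.

Lemma ccf_add (R : realType) k (f g : 'rV[R]_k -> R) :
  ccf f -> ccf g -> ccf (fun v => f v + g v).
Proof. rewrite /ccf => hf hg x. apply: continuousD; [exact: hf|exact: hg]. Qed.

Lemma ccf_mul (R : realType) k (f g : 'rV[R]_k -> R) :
  ccf f -> ccf g -> ccf (fun v => f v * g v).
Proof. rewrite /ccf => hf hg x. apply: continuousM; [exact: hf|exact: hg]. Qed.

Lemma ccf_opp (R : realType) k (f : 'rV[R]_k -> R) :
  ccf f -> ccf (fun v => - f v).
Proof. rewrite /ccf => hf x. apply: continuousN; exact: hf. Qed.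

Lemma ccf_sqrt (R : realType) k (f : 'rV[R]_k -> R) :
  ccf f -> ccf (fun v => Num.sqrt (f v)).
Proof.
move=> hf x; apply: continuous_comp; first exact: hf.
exact: sqrt_continuous.
Qed.

Lemma ccf_sum (R : realType) k l (F : 'I_l -> 'rV[R]_k -> R) :
  (forall i, ccf (F i)) -> ccf (fun v => \sum_(i < l) F i v).
Proof.
elim: l F => [|l IH] F hF.
  by apply: (@ccf_eq _ _ (fun _ => 0)); [move=> v; rewrite big_ord0|exact: ccf_cst].
apply: (@ccf_eq _ _ (fun v => \sum_(i < l) F (widen_ord (leqnSn l) i) v + F ord_max v)).
  by move=> v; rewrite big_ord_recr.
apply: ccf_add; last exact: hF.
by apply: IH => i; exact: hF.
Qed.

Definition ccol (R : realType) (k l : nat) (X : 'rV[R]_k -> 'cV[R]_l) :=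
  forall i, ccf (fun v => X v i 0).

Lemma ccol_tr (R : realType) k : ccol (fun v : 'rV[R]_k => v^T).
Proof.
move=> i; apply: (@ccf_eq _ _ (fun v : 'rV[R]_k => v 0 i)); last exact: ccf_coord.
by move=> v; rewrite mxE.
Qed.

Lemma ccol_cst (R : realType) k l (c : 'cV[R]_l) : ccol (fun _ : 'rV[R]_k => c).
Proof. by move=> i; exact: ccf_cst. Qed.

Lemma ccol_add (R : realType) k l (X Y : 'rV[R]_k -> 'cV[R]_l) :
  ccol X -> ccol Y -> ccol (fun v => X v + Y v).
Proof.
move=> hX hY i; apply: (@ccf_eq _ _ (fun v => X v i 0 + Y v i 0)); first by move=> v; rewrite mxE.
exact: ccf_add.
Qed.

Lemma ccol_opp (R : realType) k l (X : 'rV[R]_k -> 'cV[R]_l) :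
  ccol X -> ccol (fun v => - X v).
Proof.
move=> hX i; apply: (@ccf_eq _ _ (fun v => - X v i 0)); first by move=> v; rewrite mxE.
exact: ccf_opp.
Qed.

Lemma ccol_mul (R : realType) k l p (B : 'M[R]_(p, l)) (X : 'rV[R]_k -> 'cV[R]_l) :
  ccol X -> ccol (fun v => B *m X v).
Proof.
move=> hX i; apply: (@ccf_eq _ _ (fun v => \sum_j B i j * X v j 0)); first by move=> v; rewrite mxE.
by apply: ccf_sum => j; apply: ccf_mul; [exact: ccf_cst|exact: hX].
Qed.

Lemma ccol_col (R : realType) k l (g : 'I_l -> 'rV[R]_k -> R) :
  (forall i, ccf (g i)) -> ccol (fun v => \col_i g i v).
Proof.
move=> hg i; apply: (@ccf_eq _ _ (g i)); last exact: hg.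
by move=> v; rewrite mxE.
Qed.

Lemma ccf_dotv (R : realType) k l (X Y : 'rV[R]_k -> 'cV[R]_l) :
  ccol X -> ccol Y -> ccf (fun v => dotv (X v) (Y v)).
Proof.
by move=> hX hY; apply: ccf_sum => j; apply: ccf_mul; [exact: hX|exact: hY].
Qed.

Lemma ccf_vnorm (R : realType) k l (X : 'rV[R]_k -> 'cV[R]_l) :
  ccol X -> ccf (fun v => vnorm (X v)).
Proof.
move=> hX; apply: (@ccf_eq _ _ (fun v => Num.sqrt (dotv (X v) (X v)))).
  by move=> v; rewrite vnormE.
by apply: ccf_sqrt; apply: ccf_dotv.
Qed.


Lemma box_compact (R : realType) k (c : 'cV[R]_k) (r : R) :
  compact [set v : 'rV[R]_k | forall i, `[c i 0 - r, c i 0 + r]%classic (v ord0 i)].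
Proof.
by apply: (@rV_compact _ _ (fun i => `[c i 0 - r, c i 0 + r]%classic)) => i;
  exact: segment_compact.
Qed.

Lemma min_box (R : realType) k (G : 'cV[R]_k -> R) (c : 'cV[R]_k) (r : R) :
  0 <= r -> ccf (fun v => G v^T) ->
  exists2 xs : 'cV[R]_k, (forall j, `|xs j 0 - c j 0| <= r) &
    forall x : 'cV[R]_k, (forall j, `|x j 0 - c j 0| <= r) -> G xs <= G x.
Proof.
move=> r0 hG.
set A := [set v : 'rV[R]_k | forall i, `[c i 0 - r, c i 0 + r]%classic (v ord0 i)].
have A0 : A !=set0.
  exists c^T => i /=; rewrite mxE in_itv /=; apply/andP; split; lra.
have [v vA vmin] := EVT_min_rV A0 (@box_compact _ _ c r)
  (@continuous_subspaceT _ _ _ _ hG).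
have inA (x : 'cV[R]_k) : (forall j, `|x j 0 - c j 0| <= r) -> x^T \in A.
  move=> hx; rewrite inE => i; rewrite mxE /= in_itv /=.
  by have := hx i; rewrite ler_norml => /andP[h1 h2]; apply/andP; split; lra.
exists v^T.
  move=> j; rewrite inE in vA; have := vA j; rewrite mxE /= in_itv /=.
  by move=> /andP[h1 h2]; rewrite ler_norml; apply/andP; split; lra.
move=> x hx; have := vmin _ (inA x hx); by rewrite trmxK.
Qed.

Lemma normalize (R : realType) k (x : 'cV[R]_k) :
  x != 0 -> dotv ((vnorm x)^-1 *: x) ((vnorm x)^-1 *: x) = 1.
Proof.
move=> xn0; have vp : 0 < vnorm x.
  rewrite lt_neqAle vnorm_ge0 andbT eq_sym; apply/eqP => h.
  by move/eqP: xn0; apply; apply: vnorm_eq0.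
rewrite dotvZl dotvZr mulrA -expr2 -vnorm_sq exprVn mulVf //.
by rewrite expf_neq0 // gt_eqF.
Qed.

Lemma scale_norm (R : realType) k (x : 'cV[R]_k) :
  x != 0 -> x = vnorm x *: ((vnorm x)^-1 *: x).
Proof.
move=> xn0; have vp : vnorm x != 0.
  by apply/eqP => h; move/eqP: xn0; apply; apply: vnorm_eq0.
by rewrite scalerA mulfV // scale1r.
Qed.

Lemma eig_col (R : realType) k (M : 'M[R]_k) (v : 'rV[R]_k) a :
  M^T = M -> v *m M = a *: v -> M *m v^T = a *: v^T.
Proof.
move=> hs h; have := congr1 trmx h; rewrite trmx_mul hs => ->.
by rewrite linearZ.
Qed.

Lemma rayleigh (R : realType) k (M : 'M[R]_k) : (0 < k)%N -> M^T = M ->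
  exists lam, eigenvalue M lam /\
    forall x : 'cV[R]_k, lam * dotv x x <= dotv x (M *m x).
Proof.
move=> k0 hs.
set f := fun v : 'rV[R]_k => dotv v^T (M *m v^T).
set g := fun v : 'rV[R]_k => dotv v^T v^T.
have cf : continuous f by apply: ccf_dotv; [exact: ccol_tr|apply: ccol_mul; exact: ccol_tr].
have cg : continuous g by apply: ccf_dotv; exact: ccol_tr.
set S := g @^-1` [set x | x = 1].
have Scl : closed S by apply: preimage_closed; [move=> x _; exact: cg|exact: closed_eq].
have SB : S `<=` [set v : 'rV[R]_k | forall i, `[(0 : 'cV[R]_k) i 0 - 1,
   (0 : 'cV[R]_k) i 0 + 1]%classic (v ord0 i)].
  move=> v; rewrite /S /g /= => h i; rewrite mxE in_itv /=.
  have : (v^T i 0) ^+ 2 <= 1.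
    rewrite -h /dotv (bigD1 i) //= expr2 lerDl.
    by apply: sumr_ge0 => j _; exact: mul_self_ge0.
  by rewrite mxE => hv; apply/andP; split; nra.
have Scp : compact S by apply: subclosed_compact Scl (@box_compact _ _ 0 1) SB.
have S0 : S !=set0.
  set x := (const_mx 1 : 'cV[R]_k).
  have xn0 : x != 0.
    apply/eqP => /matrixP /(_ (Ordinal k0) 0); rewrite !mxE => /eqP.
    by rewrite oner_eq0.
  exists ((vnorm x)^-1 *: x)^T; rewrite /S /g /= trmxK.
  exact: normalize.
have [c cS cmin] := EVT_min_rV S0 Scp (@continuous_subspaceT _ _ _ _ cf).
set vc := c^T.
set lam := f c.
have hvc : dotv vc vc = 1 by rewrite inE in cS.
have hray : forall x : 'cV[R]_k, lam * dotv x x <= dotv x (M *m x).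
  move=> x; have [->|xn0] := eqVneq x 0; first by rewrite !dotv0l mulr0.
  set s := vnorm x; set u := s^-1 *: x.
  have uS : u^T \in S by rewrite inE /S /g /= trmxK; exact: normalize.
  have := cmin _ uS; rewrite /f trmxK -/lam => hu.
  have hu1 : dotv u u = 1 by exact: normalize.
  have ex : x = s *: u by exact: scale_norm.
  clearbody u s; rewrite ex -scalemxAr !dotvZl !dotvZr hu1 mulr1.
  have hl : lam <= dotv u (M *m u) := hu.
  have := mul_self_ge0 s; nra.
exists lam; split; last exact: hray.
set P := M - lam%:M.
have PE : forall x : 'cV[R]_k, P *m x = M *m x - lam *: x.
  by move=> x; rewrite /P mulmxBl mul_scalar_mx.
have Ppsd : forall x : 'cV[R]_k, 0 <= dotv x (P *m x).
  by move=> x; rewrite PE dotvBr dotvZr subr_ge0.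
have Pvc : dotv vc (P *m vc) = 0.
  by rewrite PE dotvBr dotvZr hvc mulr1 /lam /f -/vc subrr.
have Psym : P^T = P by rewrite /P linearB /= hs tr_scalar_mx.
have Ps : forall a b : 'cV[R]_k, dotv a (P *m b) = dotv b (P *m a).
  by move=> a b; rewrite mul_dotv Psym dotvC.
set w := P *m vc.
have w0 : w = 0.
  apply: dotv_eq0; set N := dotv w w; set cc := dotv w (P *m w).
  have cc0 : 0 <= cc by exact: Ppsd.
  have N0 : 0 <= N by exact: dotv_ge0.
  have key : forall t, 0 <= 2 * t * N + t ^+ 2 * cc.
    move=> t; have := Ppsd (vc + t *: w).
    rewrite mulmxDr -scalemxAr !dotvDl !dotvDr !dotvZl !dotvZr Pvc.
    rewrite (Ps vc w) -/w.
    suff -> : 0 + t * dotv w w + (t * dotv w w + t * (t * dotv w (P *m w))) =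
      2 * t * N + t ^+ 2 * cc by [].
    rewrite /N /cc; ring.
  have := key (- N / (cc + 1)).
  set t := - N / (cc + 1) => ht.
  have d0 : 0 < cc + 1 by lra.
  have htd : t * (cc + 1) = - N by rewrite /t mulfVK // gt_eqF.
  apply/eqP; rewrite eq_le N0 andbT; nra.
have Mvc : M *m vc = lam *: vc.
  by apply/eqP; rewrite -subr_eq0 -PE -/w w0.
apply/eigenvalueP; exists vc^T.
  have := congr1 trmx Mvc; rewrite trmx_mul hs => ->; by rewrite linearZ.
apply/eqP => h; move: hvc; rewrite -(trmxK vc) h trmx0 dotv0l => /eqP.
by rewrite eq_sym oner_eq0.
Qed.


Lemma dotv_gt0 (R : realType) k (x : 'cV[R]_k) : x != 0 -> 0 < dotv x x.
Proof.
move=> xn0; rewrite lt_neqAle dotv_ge0 andbT eq_sym; apply/eqP => h.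
by move/eqP: xn0; apply; apply: dotv_eq0.
Qed.

Lemma eig_ray (R : realType) k (M : 'M[R]_k) (lam a : R) :
  M^T = M -> (forall x : 'cV[R]_k, lam * dotv x x <= dotv x (M *m x)) ->
  eigenvalue M a -> lam <= a.
Proof.
move=> hs hray /eigenvalueP [v hv vn0].
have xn0 : v^T != 0 by apply/eqP => h; move/eqP: vn0; apply; rewrite -(trmxK v) h trmx0.
have := hray v^T; rewrite (eig_col hs hv) dotvZr.
by rewrite ler_pM2r // dotv_gt0.
Qed.

Lemma lmin_bound (R : realType) k (M : 'M[R]_k) : (0 < k)%N -> M^T = M ->
  forall x : 'cV[R]_k, lambda_min M * dotv x x <= dotv x (M *m x).
Proof.
move=> k0 hs; have [lam [hl hray]] := rayleigh k0 hs.
suff -> : lambda_min M = lam by [].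
have lb : lbound [set a : R | eigenvalue M a] lam.
  by move=> a /= ha; exact: eig_ray hs hray ha.
apply/le_anti/andP; split.
  by apply: ge_inf => //; exists lam.
by apply: lb_le_inf => //; exists lam.
Qed.

Lemma lmax_bound (R : realType) k (M : 'M[R]_k) : (0 < k)%N -> M^T = M ->
  forall x : 'cV[R]_k, dotv x (M *m x) <= lambda_max M * dotv x x.
Proof.
move=> k0 hs.
have hs' : (- M)^T = - M by rewrite linearN /= hs.
have [lam [hl hray]] := rayleigh k0 hs'.
suff -> : lambda_max M = - lam.
  move=> x; have := hray x; rewrite mulNmx dotvNr; lra.
have ub : ubound [set a : R | eigenvalue M a] (- lam).
  move=> a /= ha; rewrite lerNr; apply: eig_ray hs' hray _.
  move/eigenvalueP: ha => [v hv vn0]; apply/eigenvalueP; exists v => //.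
  by rewrite mulmxN hv scaleNr.
have hlE : eigenvalue M (- lam).
  move/eigenvalueP: hl => [v hv vn0]; apply/eigenvalueP; exists v => //.
  by rewrite scaleNr -hv mulmxN opprK.
apply/le_anti/andP; split.
  by apply: ge_sup => //; exists (- lam).
by apply: ub_le_sup => //; exists (- lam).
Qed.


Definition Jm (R : realType) n m (Ai : 'I_m -> 'M[R]_n) (ai : 'I_m -> 'cV[R]_n)
  (x : 'cV[R]_n) : 'M[R]_(m, n) := \matrix_(i, k) (Ai i *m x + ai i) k 0.

Definition Qv (R : realType) n m (Ai : 'I_m -> 'M[R]_n) (h : 'cV[R]_n) : 'cV[R]_m :=
  \col_i (2^-1 * dotv h (Ai i *m h)).

Lemma quadmapE (R : realType) n m (Ai : 'I_m -> 'M[R]_n) ai x i :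
  quadmap Ai ai x i 0 = 2^-1 * dotv x (Ai i *m x) + dotv (ai i) x.
Proof. by rewrite /quadmap mxE !dotvE mulmxA. Qed.

Lemma JmE (R : realType) n m (Ai : 'I_m -> 'M[R]_n) ai x h i :
  (Jm Ai ai x *m h) i 0 = dotv (Ai i *m x + ai i) h.
Proof. by rewrite mxE /dotv; apply: eq_bigr => k _; rewrite mxE. Qed.

Lemma dotv_sym (R : realType) n (A : 'M[R]_n) x y :
  A^T = A -> dotv x (A *m y) = dotv y (A *m x).
Proof. by move=> hs; rewrite mul_dotv hs dotvC. Qed.

Lemma addE3 (R : realType) m (A B C : 'cV[R]_m) i :
  (A + B + C) i 0 = A i 0 + B i 0 + C i 0.
Proof. by rewrite !mxE. Qed.

Lemma QvE (R : realType) n m (Ai : 'I_m -> 'M[R]_n) h i :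
  Qv Ai h i 0 = 2^-1 * dotv h (Ai i *m h).
Proof. by rewrite mxE. Qed.

Lemma qexpand (R : realType) n m (Ai : 'I_m -> 'M[R]_n) ai x h :
  (forall i, (Ai i)^T = Ai i) ->
  quadmap Ai ai (x + h) = quadmap Ai ai x + Jm Ai ai x *m h + Qv Ai h.
Proof.
move=> hs; apply/matrixP => i j; rewrite (ord1 j) addE3 QvE.
rewrite !quadmapE JmE mulmxDr !dotvDl !dotvDr (dotv_sym x h (hs i)).
rewrite (dotvC h (Ai i *m x)).
by field.
Qed.

Lemma QvZ (R : realType) n m (Ai : 'I_m -> 'M[R]_n) (c : R) h :
  Qv Ai (c *: h) = c ^+ 2 *: Qv Ai h.
Proof.
apply/matrixP => i j; rewrite !mxE -scalemxAr dotvZl dotvZr; ring.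
Qed.

Lemma JmT (R : realType) n m (Ai : 'I_m -> 'M[R]_n) ai x (y : 'cV[R]_m) :
  (Jm Ai ai x)^T *m y = colmat ai *m y + \sum_i y i 0 *: (Ai i *m x).
Proof.
apply/matrixP => k j; rewrite (ord1 j) !mxE summxE -big_split /=.
by apply: eq_bigr => i _; rewrite !mxE mulrDl; ring.
Qed.

Lemma dotv_sum (R : realType) k l (F : 'I_l -> 'cV[R]_k) x :
  dotv x (\sum_i F i) = \sum_i dotv x (F i).
Proof.
rewrite /dotv exchange_big /=; apply: eq_bigr => j _.
by rewrite summxE mulr_sumr.
Qed.

Lemma coord_le (R : realType) k (z : 'cV[R]_k) j : `|z j 0| <= vnorm z.
Proof.
apply: le_of_sq; first exact: vnorm_ge0.
rewrite real_normK ?num_real // vnorm_sq /dotv (bigD1 j) //= expr2 lerDl.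
by apply: sumr_ge0 => i _; exact: mul_self_ge0.
Qed.


Lemma sumA_bound (R : realType) n m (Ai : 'I_m -> 'M[R]_n) : (0 < n)%N ->
  forall d : 'cV[R]_n, \sum_i dotv (Ai i *m d) (Ai i *m d) <=
    lambda_max (\sum_(i < m) ((Ai i)^T *m Ai i)) * dotv d d.
Proof.
move=> n0 d.
have -> : \sum_i dotv (Ai i *m d) (Ai i *m d) =
    dotv d ((\sum_(i < m) ((Ai i)^T *m Ai i)) *m d).
  rewrite mulmx_suml dotv_sum; apply: eq_bigr => i _.
  by rewrite -mulmxA mul_dotv dotvC.
apply: lmax_bound => //.
rewrite linear_sum /=; apply: eq_bigr => i _.
by rewrite trmx_mul trmxK.
Qed.

Lemma Qv_bound (R : realType) n m (Ai : 'I_m -> 'M[R]_n) : (0 < n)%N ->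
  0 <= lambda_max (\sum_(i < m) ((Ai i)^T *m Ai i)) ->
  forall h : 'cV[R]_n, vnorm (Qv Ai h) <=
    Num.sqrt (lambda_max (\sum_(i < m) ((Ai i)^T *m Ai i))) / 2 * dotv h h.
Proof.
move=> n0 hL2 h.
set L2 := lambda_max _ in hL2 *.
set L := Num.sqrt L2.
have LL : L ^+ 2 = L2 by rewrite sqr_sqrtr.
have L0 : 0 <= L by rewrite sqrtr_ge0.
have hh := dotv_ge0 h.
apply: le_of_sq; first by rewrite mulr_ge0 // divr_ge0.
rewrite vnorm_sq.
have -> : dotv (Qv Ai h) (Qv Ai h) =
    \sum_i (2^-1 * dotv h (Ai i *m h)) * (2^-1 * dotv h (Ai i *m h)).
  by apply: eq_bigr => i _; rewrite !mxE.
apply: (@le_trans _ _ (\sum_i 4^-1 * dotv h h * dotv (Ai i *m h) (Ai i *m h))).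
  apply: ler_sum => i _.
  have := CSv h (Ai i *m h).
  have -> : (2^-1 * dotv h (Ai i *m h)) * (2^-1 * dotv h (Ai i *m h)) =
    4^-1 * dotv h (Ai i *m h) ^+ 2 by field.
  rewrite -mulrA; apply: ler_wpM2l.
  by rewrite invr_ge0.
rewrite -mulr_sumr.
have := sumA_bound Ai n0 h; rewrite -/L2 => hs.
have -> : (L / 2 * dotv h h) ^+ 2 = 4^-1 * dotv h h * (L2 * dotv h h).
  by rewrite -LL; field.
apply: ler_wpM2l => //; rewrite mulr_ge0 // invr_ge0 //.
Qed.

Lemma B_bound (R : realType) n m (Ai : 'I_m -> 'M[R]_n) : (0 < n)%N ->
  (forall i, (Ai i)^T = Ai i) ->
  0 <= lambda_max (\sum_(i < m) ((Ai i)^T *m Ai i)) ->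
  forall (x : 'cV[R]_n) (y : 'cV[R]_m),
  vnorm (\sum_i y i 0 *: (Ai i *m x)) <=
    Num.sqrt (lambda_max (\sum_(i < m) ((Ai i)^T *m Ai i))) * vnorm x * vnorm y.
Proof.
move=> n0 hs hL2 x y.
set L2 := lambda_max _ in hL2 *.
set L := Num.sqrt L2.
have LL : L ^+ 2 = L2 by rewrite sqr_sqrtr.
have L0 : 0 <= L by rewrite sqrtr_ge0.
set B := \sum_i y i 0 *: (Ai i *m x).
set z := \col_i dotv x (Ai i *m B).
have h1 : dotv B B = dotv y z.
  rewrite {1}/B dotv_sum /dotv; apply: eq_bigr => i _.
  rewrite -/(dotv _ _) dotvZr mxE (dotv_sym _ _ (hs i)); ring.
have h2 : vnorm z <= L * vnorm B * vnorm x.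
  apply: le_of_sq; first by rewrite !mulr_ge0 // vnorm_ge0.
  rewrite vnorm_sq.
  apply: (@le_trans _ _ (\sum_i dotv x x * dotv (Ai i *m B) (Ai i *m B))).
    apply: ler_sum => i _; rewrite !mxE -expr2; exact: CSv.
  rewrite -mulr_sumr.
  have := sumA_bound Ai n0 B; rewrite -/L2 => hsb.
  rewrite !exprMn LL !vnorm_sq mulrC -mulrA [dotv B B * _]mulrC mulrA.
  rewrite -mulrA [dotv x x * _]mulrC mulrA; apply: ler_wpM2r => //; exact: dotv_ge0.
have h3 : vnorm B ^+ 2 <= vnorm y * (L * vnorm B * vnorm x).
  rewrite vnorm_sq h1; apply: le_trans (dotv_le' y z) _.
  by apply: ler_wpM2l => //; exact: vnorm_ge0.
have c0 : 0 <= L * vnorm x * vnorm y by rewrite !mulr_ge0 // vnorm_ge0.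
have e : vnorm y * (L * vnorm B * vnorm x) = vnorm B * (L * vnorm x * vnorm y) by ring.
rewrite e in h3; move: h3 c0.
set b := vnorm B; set c := L * vnorm x * vnorm y => h3 c0.
rewrite leNgt; apply/negP => hlt.
have b0 : 0 < b by lra.
have : b * c < b * b by rewrite ltr_pM2l.
rewrite -expr2 in h3 *; lra.
Qed.

Lemma Ay_bound (R : realType) n m (ai : 'I_m -> 'cV[R]_n) : (0 < m)%N ->
  0 < sigma_min (colmat ai) -> forall y : 'cV[R]_m,
  sigma_min (colmat ai) * vnorm y <= vnorm (colmat ai *m y).
Proof.
move=> m0 hnu y.
move: hnu; rewrite /sigma_min; set lam := lambda_min _ => hnu.
have lam0 : 0 < lam by rewrite -sqrtr_gt0.
apply: le_of_sq; first exact: vnorm_ge0.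
rewrite exprMn sqr_sqrtr; last exact: ltW.
rewrite !vnorm_sq mul_dotv dotvC mulmxA.
apply: lmin_bound => //.
by rewrite trmx_mul trmxK.
Qed.

Lemma solve_lin (R : realType) n m (J : 'M[R]_(m, n)) (mu : R) :
  0 < mu -> (forall y : 'cV[R]_m, mu * vnorm y <= vnorm (J^T *m y)) ->
  forall r : 'cV[R]_m, exists d : 'cV[R]_n, J *m d = r /\ mu * vnorm d <= vnorm r.
Proof.
move=> mu0 hJ r.
set N := J *m J^T.
have NT : N^T = N by rewrite /N trmx_mul trmxK.
have hq : forall z : 'cV[R]_m, dotv z (N *m z) = dotv (J^T *m z) (J^T *m z).
  by move=> z; rewrite /N -mulmxA mul_dotv.
have Nu : N \in unitmx.
  rewrite -row_free_unit; apply: inj_row_free => v hv.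
  have hz : N *m v^T = 0 by rewrite -NT -trmx_mul hv trmx0.
  have : dotv (J^T *m v^T) (J^T *m v^T) = 0 by rewrite -hq hz dotv0r.
  move/dotv_eq0 => h0.
  have := hJ v^T; rewrite h0 vnorm0 => hle.
  have hv0 : vnorm v^T = 0.
    apply/le_anti/andP; split; last exact: vnorm_ge0.
    by rewrite -(pmulr_rle0 _ mu0).
  by rewrite -(trmxK v) (vnorm_eq0 hv0) trmx0.
set z := invmx N *m r.
exists (J^T *m z); split.
  by rewrite mulmxA -/N /z mulmxA mulmxV // mul1mx.
have hdd : dotv (J^T *m z) (J^T *m z) = dotv z r.
  by rewrite -hq /z mulmxA mulmxV // mul1mx.
have h1 : vnorm (J^T *m z) ^+ 2 <= vnorm z * vnorm r.
  by rewrite vnorm_sq hdd dotv_le'.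
have h2 := hJ z.
move: h1 h2; set D := vnorm (J^T *m z); set Z := vnorm z; set Rr := vnorm r.
have D0 : 0 <= D by exact: vnorm_ge0.
have Z0 : 0 <= Z by exact: vnorm_ge0.
have R0 : 0 <= Rr by exact: vnorm_ge0.
move=> h1 h2.
rewrite leNgt; apply/negP => hlt.
have Dp : 0 < D by nra.
have : mu * D * D <= mu * Z * Rr by rewrite -!mulrA; apply: ler_wpM2l; [exact: ltW|rewrite -expr2].
nra.
Qed.

Lemma JT_bound (R : realType) n m (Ai : 'I_m -> 'M[R]_n) ai : (0 < n)%N -> (0 < m)%N ->
  (forall i, (Ai i)^T = Ai i) ->
  0 <= lambda_max (\sum_(i < m) ((Ai i)^T *m Ai i)) ->
  0 < sigma_min (colmat ai) ->
  forall (x : 'cV[R]_n) (y : 'cV[R]_m),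
  (sigma_min (colmat ai) -
     Num.sqrt (lambda_max (\sum_(i < m) ((Ai i)^T *m Ai i))) * vnorm x) * vnorm y
   <= vnorm ((Jm Ai ai x)^T *m y).
Proof.
move=> n0 m0 hs hL2 hnu x y.
have h1 := Ay_bound m0 hnu y.
have h2 := B_bound n0 hs hL2 x y.
rewrite JmT.
set A := colmat ai *m y; set B := \sum_i y i 0 *: (Ai i *m x).
have h3 : vnorm A <= vnorm (A + B) + vnorm B.
  have := vnormD (A + B) (- B); by rewrite addrK vnormN.
rewrite mulrBl; lra.
Qed.


Lemma ccol_quadmap (R : realType) n m (Ai : 'I_m -> 'M[R]_n) ai :
  ccol (fun v : 'rV[R]_n => quadmap Ai ai v^T).
Proof.
move=> i.
apply: (@ccf_eq _ _ (fun v => 2^-1 * dotv v^T (Ai i *m v^T) + dotv (ai i) v^T)).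
  by move=> v; rewrite quadmapE.
apply: ccf_add; first apply: ccf_mul; first exact: ccf_cst.
- by apply: ccf_dotv; [exact: ccol_tr|apply: ccol_mul; exact: ccol_tr].
- by apply: ccf_dotv; [exact: ccol_cst|exact: ccol_tr].
Qed.

Lemma vnorm_le_sq (R : realType) k (x : 'cV[R]_k) (e : R) :
  vnorm x <= e -> dotv x x <= e ^+ 2.
Proof. by move=> h; rewrite -vnorm_sq; have := vnorm_ge0 x; nra. Qed.

Lemma main_conv (R : realType) n m (Ai : 'I_m -> 'M[R]_n) (ai : 'I_m -> 'cV[R]_n)
    (L nu eps : R) (a x1 x2 : 'cV[R]_n) (t : R) :
  (forall i, (Ai i)^T = Ai i) ->
  0 < L -> 0 < eps -> L * (vnorm a + 2 * eps) < nu ->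
  (forall h, vnorm (Qv Ai h) <= L / 2 * dotv h h) ->
  (forall x r, 0 < nu - L * vnorm x -> exists d,
      Jm Ai ai x *m d = r /\ (nu - L * vnorm x) * vnorm d <= vnorm r) ->
  0 <= t -> t <= 1 -> vnorm (x1 - a) <= eps -> vnorm (x2 - a) <= eps ->
  exists2 x, vnorm (x - a) <= eps &
    quadmap Ai ai x = t *: quadmap Ai ai x1 + (1 - t) *: quadmap Ai ai x2.
Proof.
move=> hs L0 eps0 hLa hQ hsolve t0 t1 hx1 hx2.
set f := quadmap Ai ai.
set y := t *: f x1 + (1 - t) *: f x2.
set x0 := t *: x1 + (1 - t) *: x2.
set h := x1 - x2.
set s := t * (1 - t).
have s0 : 0 <= s by rewrite /s mulr_ge0 // subr_ge0.
have e1 : x1 = x0 + (1 - t) *: h.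
  by apply/matrixP => i j; rewrite !mxE; ring.
have e2 : x2 = x0 + (- t) *: h.
  by apply/matrixP => i j; rewrite !mxE; ring.
have fy : f x0 - y = - (s *: Qv Ai h).
  rewrite /y e1 e2 /f !qexpand // !QvZ -!scalemxAr.
  set F := quadmap Ai ai x0; set Jh := Jm Ai ai x0 *m h; set Q := Qv Ai h.
  by apply/matrixP => i j; rewrite !mxE /s; ring.
have ea : x0 - a = t *: (x1 - a) + (1 - t) *: (x2 - a).
  by apply/matrixP => i j; rewrite !mxE; ring.
have eh : h = (x1 - a) - (x2 - a).
  by apply/matrixP => i j; rewrite !mxE; ring.
set U := s * dotv h h.
have U0 : 0 <= U by rewrite mulr_ge0 // dotv_ge0.
have D0 : dotv (x0 - a) (x0 - a) <= eps ^+ 2 - U.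
  have d1 := vnorm_le_sq hx1; have d2 := vnorm_le_sq hx2.
  have key : forall u v : 'cV[R]_n,
      dotv (t *: u + (1 - t) *: v) (t *: u + (1 - t) *: v) =
      t * dotv u u + (1 - t) * dotv v v - s * dotv (u - v) (u - v).
    move=> u v; rewrite dotv_comb !dotvBl !dotvBr (dotvC v u) /s; ring.
  rewrite /U eh ea key.
  have : t * dotv (x1 - a) (x1 - a) <= t * eps ^+ 2 by rewrite ler_wpM2l.
  have : (1 - t) * dotv (x2 - a) (x2 - a) <= (1 - t) * eps ^+ 2.
    by rewrite ler_wpM2l // subr_ge0.
  lra.
have gx0 : vnorm (f x0 - y) <= L / 2 * U.
  rewrite fy vnormN vnormZ ger0_norm // /U.
  have := hQ h; have := vnorm_ge0 (Qv Ai h); nra.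
set G := fun x => vnorm (f x - y) + L * eps * vnorm (x - x0).
have cG : ccf (fun v => G v^T).
  apply: ccf_add.
    apply: ccf_vnorm; apply: ccol_add; [exact: ccol_quadmap|exact: ccol_cst].
  apply: ccf_mul; first exact: ccf_cst.
  apply: ccf_vnorm; apply: ccol_add; [exact: ccol_tr|exact: ccol_cst].
have [xs hbox hmin] := @min_box _ _ G x0 eps (ltW eps0) cG.
have Gx0 : G x0 = vnorm (f x0 - y) by rewrite /G subrr vnorm0 mulr0 addr0.
have hq : L * eps * vnorm (xs - x0) <= L / 2 * U.
  have hb : forall j, `|x0 j 0 - x0 j 0| <= eps by move=> j; rewrite subrr normr0 ltW.
  have := hmin x0 hb; rewrite Gx0 /G => hle.
  have := vnorm_ge0 (f xs - y); lra.
set q := vnorm (xs - x0) in hq *.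
set p := vnorm (x0 - a).
have q0 : 0 <= q by exact: vnorm_ge0.
have p0 : 0 <= p by exact: vnorm_ge0.
have q_le : 2 * eps * q <= U by nra.
have p2 : p ^+ 2 <= eps ^+ 2 - U by rewrite /p vnorm_sq.
have xsa : vnorm (xs - a) <= eps.
  have e3 : xs - a = (xs - x0) + (x0 - a) by rewrite addrA subrK.
  rewrite e3; apply: le_trans (vnormD _ _) _; rewrite -/q -/p.
  have := sqr_ge0 (eps - p); nra.
have qeps : q <= eps / 2.
  rewrite ler_pdivlMr //; nra.
exists xs => //.
suff : f xs - y = 0 by move/eqP; rewrite subr_eq0 => /eqP.
apply: vnorm_eq0; apply/eqP; rewrite eq_le vnorm_ge0 andbT leNgt; apply/negP => rpos.
have xsn : vnorm xs <= vnorm a + eps.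
  have e4 : xs = (xs - a) + a by rewrite subrK.
  rewrite {1}e4; apply: le_trans (vnormD _ _) _; lra.
set mu := nu - L * vnorm xs.
have mu1 : L * eps < mu.
  rewrite /mu; have : L * vnorm xs <= L * (vnorm a + eps) by rewrite ler_wpM2l // ltW.
  lra.
have mu0 : 0 < nu - L * vnorm xs by have := mulr_gt0 L0 eps0; rewrite -/mu; lra.
have [d [hd hdn]] := hsolve xs (- (f xs - y)) mu0.
rewrite vnormN -/mu in hdn.
set r := vnorm (f xs - y) in rpos hdn.
set C := L / 2 * dotv d d.
have C0 : 0 <= C by rewrite mulr_ge0 ?dotv_ge0 // divr_ge0 // ltW.
have dn0 : 0 <= vnorm d by exact: vnorm_ge0.
set del := r - L * eps * vnorm d.
have del0 : 0 < del.
  rewrite /del; have : L * eps * vnorm d <= mu * vnorm d by rewrite ler_wpM2r // ltW.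
  have := mulr_gt0 L0 eps0; nra.
set tau := Num.min 1 (Num.min (eps / (2 * (vnorm d + 1))) (del / (C + 1))).
have tau0 : 0 < tau.
  rewrite !lt_min ltr01 /= !divr_gt0 //; lra.
have tau1 : tau <= 1 by rewrite /tau ge_min lexx.
have tau2 : tau * (2 * (vnorm d + 1)) <= eps.
  rewrite -ler_pdivlMr; last lra.
  by rewrite /tau ge_min; apply/orP; right; rewrite ge_min lexx.
have tau3 : tau * (C + 1) <= del.
  rewrite -ler_pdivlMr; last lra.
  by rewrite /tau ge_min; apply/orP; right; rewrite ge_min lexx orbT.
set x' := xs + tau *: d.
have fx' : f x' - y = (1 - tau) *: (f xs - y) + tau ^+ 2 *: Qv Ai d.
  rewrite /x' /f qexpand // -scalemxAr hd QvZ.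
  set F := quadmap Ai ai xs; set Q := Qv Ai d.
  by apply/matrixP => i j; rewrite !mxE; ring.
have g' : vnorm (f x' - y) <= (1 - tau) * r + tau ^+ 2 * C.
  rewrite fx'; apply: le_trans (vnormD _ _) _.
  rewrite !vnormZ ger0_norm; last lra.
  rewrite ger0_norm; last exact: sqr_ge0.
  apply: lerD => //; apply: ler_wpM2l; [exact: sqr_ge0|exact: hQ].
have x'0 : vnorm (x' - x0) <= q + tau * vnorm d.
  have e5 : x' - x0 = (xs - x0) + tau *: d by rewrite /x' addrAC.
  rewrite e5; apply: le_trans (vnormD _ _) _; rewrite vnormZ ger0_norm //; lra.
have box' : forall j, `|x' j 0 - x0 j 0| <= eps.
  move=> j; have := coord_le (x' - x0) j; rewrite !mxE => hj.
  apply: le_trans hj _; apply: le_trans x'0 _.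
  have : tau * vnorm d <= eps / 2 by nra.
  lra.
have := hmin x' box'; rewrite /G -/q -/r => hle.
have hG' : vnorm (f x' - y) + L * eps * vnorm (x' - x0) <=
    (1 - tau) * r + tau ^+ 2 * C + L * eps * (q + tau * vnorm d).
  apply: lerD => //; apply: ler_wpM2l => //; by rewrite mulr_ge0 // ltW.
have : tau * del <= tau * (tau * C) by rewrite /del; nra.
have : tau * (tau * C) < tau * del.
  rewrite ltr_pM2l //; nra.
lra.
Qed.


Unset Implicit Arguments.

Theorem theorem3 (R : realType) (n m : nat) (hn : (1 <= n)%N) (hm : (1 <= m)%N)
  (Ai : 'I_m -> 'M[R]_n) (ai : 'I_m -> 'cV[R]_n)
  (hsym : forall i, (Ai i)^T = Ai i)
  (hL : 0 < Num.sqrt (lambda_max (\sum_(i < m) ((Ai i)^T *m Ai i)))) :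
  let Lnew := Num.sqrt (lambda_max (\sum_(i < m) ((Ai i)^T *m Ai i))) in
  let nu := sigma_min (colmat ai) in
  let epsstar := nu / (2 * Lnew) in
  forall (eps : R) (a : 'cV[R]_n),
    0 < eps -> eps < epsstar -> vnorm a < 2 * (epsstar - eps) ->
    convex_set (Fm Ai ai eps a : set (convex_lmodType 'cV[R]_m)).
Proof.
move=> Lnew nu epsstar eps a eps0 heps ha.
have L2pos : 0 <= lambda_max (\sum_(i < m) ((Ai i)^T *m Ai i)).
  by apply: ltW; rewrite -sqrtr_gt0.
have nu0 : 0 < nu.
  have es0 : 0 < epsstar by apply: lt_trans eps0 heps.
  have -> : nu = epsstar * (2 * Lnew) by rewrite /epsstar mulfVK // gt_eqF // mulr_gt0.
  by rewrite mulr_gt0 // mulr_gt0.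
have hLa : Lnew * (vnorm a + 2 * eps) < nu.
  have h1 : Lnew * vnorm a < Lnew * (2 * (epsstar - eps)) by rewrite ltr_pM2l.
  have h2 : Lnew * (2 * (epsstar - eps)) = nu - 2 * Lnew * eps.
    by rewrite /epsstar; field; rewrite gt_eqF.
  lra.
have hQ := @Qv_bound _ _ _ Ai hn L2pos.
have hsolve : forall x r, 0 < nu - Lnew * vnorm x -> exists d,
    Jm Ai ai x *m d = r /\ (nu - Lnew * vnorm x) * vnorm d <= vnorm r.
  move=> x r hmu; apply: solve_lin => // y.
  exact: JT_bound.
move=> u v lam; rewrite !inE => -[x1 hx1 <-] [x2 hx2 <-].
have [x hx hfx] := main_conv hsym hL eps0 hLa hQ hsolve (ge0 lam) (le1 lam) hx1 hx2.
by exists x.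
Qed.
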